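(* For every positive integer $n$, $|M_e(\mathcal{D},n)-M_o(\mathcal{D},n)|\le 2$, and $M_e(\mathcal{D},n)=M_o(\mathcal{D},n)$ for infinitely many positive integers $n$.
   Context: $M_e(\mathcal{D},n)$ (resp. $M_o(\mathcal{D},n)$) is the number of partitions of $n$ into distinct parts with even (resp. odd) crank, where for a partition into distinct parts the crank is its largest part if $1$ is not a part, and is (number of parts) $-2$ if $1$ is a part. *)

(* Defs.v *)
From mathcomp Require Import all_boot all_order all_algebra.
Set Implicit Arguments. Unset Strict Implicit. Unset Printing Implicit Defensive.
Import Order.TTheory GRing.Theory Num.Theory.

(* A partition of n into distinct parts is a finite set S of positive
   integers with sum n; all parts are <= n, so S is a set of 'I_n.+1
   (values of the elements are the parts) not containing 0. *)
Definition dpart (n : nat) : {set {set 'I_n.+1}} :=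
  [set S : {set 'I_n.+1} | (ord0 \notin S) && (\sum_(i in S) (i : nat) == n)%N].

Definition largest_part n (S : {set 'I_n.+1}) : nat := \max_(i in S) (i : nat).

Definition has_one n (S : {set 'I_n.+1}) : bool := [exists i in S, (i : nat) == 1%N].

Definition dcrank n (S : {set 'I_n.+1}) : int :=
  if has_one S then (Posz #|S| - 2)%R else Posz (largest_part S).

Definition crank_even n (S : {set 'I_n.+1}) : bool := ~~ odd `|dcrank S|%N.

Definition Me (n : nat) : nat := #|[set S in dpart n | crank_even S]|.
Definition Mo (n : nat) : nat := #|[set S in dpart n | ~~ crank_even S]|.

(* Main.v *)
Require Import Defs.
From mathcomp Require Import all_boot all_order all_algebra zify.
Import Order.TTheory GRing.Theory Num.Theory.
Set Implicit Arguments. Unset Strict Implicit. Unset Printing Implicit Defensive.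

Definition inS {N} (S : {set 'I_N.+1}) (x : nat) : bool := (x <= N) && (inord x \in S).

Lemma inS_val N (S : {set 'I_N.+1}) (i : 'I_N.+1) : inS S i = (i \in S).
Proof. by rewrite /inS inord_val -ltnS ltn_ord. Qed.

Lemma inS_le N (S : {set 'I_N.+1}) x : inS S x -> x <= N.
Proof. by case/andP. Qed.

Lemma setext N (S1 S2 : {set 'I_N.+1}) : (forall x, inS S1 x = inS S2 x) -> S1 = S2.
Proof. move=> H; apply/setP=> i; by rewrite -!inS_val H. Qed.

Lemma eq_inord N (i : 'I_N.+1) a : a <= N -> (i == inord a) = ((i : nat) == a).
Proof.
move=> ha; apply/eqP/eqP => [->|<-]; first by rewrite inordK.
by rewrite inord_val.
Qed.

Lemma inS_U1 N (S : {set 'I_N.+1}) a x : a <= N ->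
  inS (inord a |: S) x = (x == a) || inS S x.
Proof.
move=> ha; rewrite /inS in_setU1; case: (leqP x N) => hx /=.
  by rewrite eq_inord // inordK.
by rewrite (_ : (x == a) = false) //; apply/eqP; lia.
Qed.

Lemma inS_D1 N (S : {set 'I_N.+1}) a x : a <= N ->
  inS (S :\ inord a) x = (x != a) && inS S x.
Proof.
move=> ha; rewrite /inS in_setD1; case: (leqP x N) => hx /=.
  by rewrite eq_inord // inordK.
by rewrite andbF.
Qed.

Lemma inS0 N x : inS (set0 : {set 'I_N.+1}) x = false.
Proof. by rewrite /inS in_set0 andbF. Qed.

Lemma notin_inord N (S : {set 'I_N.+1}) a : a <= N -> ~~ inS S a -> inord a \notin S.
Proof. by move=> ha; rewrite /inS ha. Qed.

Lemma in_inord N (S : {set 'I_N.+1}) a : inS S a -> inord a \in S.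
Proof. by case/andP. Qed.

Definition sumS {N} (S : {set 'I_N.+1}) : nat := \sum_(i in S) (i : nat).

Lemma sumS_U1 N (S : {set 'I_N.+1}) a : a <= N -> ~~ inS S a ->
  sumS (inord a |: S) = a + sumS S.
Proof. by move=> ha hn; rewrite /sumS big_setU1 ?notin_inord //= inordK. Qed.

Lemma sumS_D1 N (S : {set 'I_N.+1}) a : inS S a ->
  sumS S = a + sumS (S :\ inord a).
Proof.
move=> h; rewrite /sumS (big_setD1 (inord a)) ?in_inord //= inordK //.
by rewrite ltnS (inS_le h).
Qed.

Lemma cardS_U1 N (S : {set 'I_N.+1}) a : a <= N -> ~~ inS S a ->
  #|inord a |: S| = #|S|.+1.
Proof. by move=> ha hn; rewrite cardsU1 notin_inord. Qed.

Lemma cardS_D1 N (S : {set 'I_N.+1}) a : inS S a ->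
  #|S| = #|S :\ inord a|.+1.
Proof. by move=> h; rewrite (cardsD1 (inord a)) in_inord. Qed.

Lemma le_sumS N (S : {set 'I_N.+1}) x : inS S x -> x <= sumS S.
Proof. by move=> h; rewrite (sumS_D1 h) leq_addr. Qed.

Lemma le_sumS2 N (S : {set 'I_N.+1}) x y : inS S x -> inS S y -> x != y ->
  x + y <= sumS S.
Proof.
move=> hx hy nxy; rewrite (sumS_D1 hx) leq_add2l le_sumS //.
by rewrite inS_D1 ?(inS_le hx) // eq_sym nxy.
Qed.

Definition maxS {N} (S : {set 'I_N.+1}) : nat := \max_(i in S) (i : nat).

Lemma maxS_ub N (S : {set 'I_N.+1}) x : inS S x -> x <= maxS S.
Proof.
move=> h; have := @leq_bigmax_cond _ (fun i => i \in S) (fun i : 'I_N.+1 => (i : nat)) _ (in_inord h).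
by rewrite inordK // ltnS (inS_le h).
Qed.

Lemma maxS_in N (S : {set 'I_N.+1}) : S != set0 -> inS S (maxS S).
Proof.
move=> h; have : 0 < #|S| by rewrite card_gt0.
case/(@eq_bigmax_cond _ (mem S) (fun i : 'I_N.+1 => (i : nat))) => i iS e.
by rewrite /maxS e inS_val.
Qed.

Lemma maxS_eq N (S : {set 'I_N.+1}) m : inS S m -> (forall x, inS S x -> x <= m) ->
  maxS S = m.
Proof.
move=> hm hx; apply/eqP; rewrite eqn_leq maxS_ub // andbT.
by apply/bigmax_leqP => i iS; apply: hx; rewrite inS_val.
Qed.

Lemma find_iota (p : pred nat) K x : p x -> x < K ->
  p (find p (iota 0 K)) /\ find p (iota 0 K) <= x.
Proof.
move=> px xK.
have hh : has p (iota 0 K) by apply/hasP; exists x => //; rewrite mem_iota.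
have hlt : find p (iota 0 K) < K by rewrite -{2}(size_iota 0 K) -has_find.
split; first by have := nth_find 0 hh; rewrite nth_iota.
rewrite leqNgt; apply/negP => hlt2.
by have := before_find 0 hlt2; rewrite nth_iota // px.
Qed.

Lemma find_iota_ge (p : pred nat) K k : (forall i, i < k -> ~~ p i) -> k <= K ->
  k <= find p (iota 0 K).
Proof.
move=> hk kK; rewrite leqNgt; apply/negP => hlt.
have hK : find p (iota 0 K) < K by lia.
have hh : has p (iota 0 K) by rewrite has_find size_iota.
by have := nth_find 0 hh; rewrite nth_iota // (negbTE (hk _ hlt)).
Qed.

Lemma find_iota_eq (p : pred nat) K k : (forall i, i < k -> ~~ p i) -> p k -> k < K ->
  find p (iota 0 K) = k.
Proof.
move=> h1 h2 h3; apply/eqP; rewrite eqn_leq find_iota_ge ?(ltnW h3) // andbT.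
by case: (find_iota h2 h3).
Qed.

Definition minS {N} (S : {set 'I_N.+1}) : nat := find (inS S) (iota 0 N.+1).

Lemma minS_spec N (S : {set 'I_N.+1}) x : inS S x -> inS S (minS S) /\ minS S <= x.
Proof. by move=> h; apply: find_iota => //; rewrite ltnS (inS_le h). Qed.

Lemma minS_eq N (S : {set 'I_N.+1}) s : inS S s -> (forall x, inS S x -> s <= x) ->
  minS S = s.
Proof.
move=> hs hx; case: (minS_spec hs) => h1 h2.
by apply/eqP; rewrite eqn_leq h2 hx.
Qed.

Definition runS {N} (S : {set 'I_N.+1}) : nat :=
  find (fun i => ~~ inS S (maxS S - i)) (iota 0 N.+1).

Lemma runS_spec N (S : {set 'I_N.+1}) : S != set0 -> ~~ inS S 0 ->
  ~~ inS S (maxS S - runS S) /\ runS S <= maxS S /\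
  (forall i, i < runS S -> inS S (maxS S - i)).
Proof.
move=> ne n0.
have hm := inS_le (maxS_in ne).
have [h1 h2] : ~~ inS S (maxS S - runS S) /\ runS S <= maxS S.
  apply: (find_iota (p := fun i => ~~ inS S (maxS S - i))); [by rewrite subnn | by rewrite ltnS].
do 2!split => //.
move=> i hi; have := @before_find _ 0 _ _ _ hi.
by rewrite nth_iota /= ?add0n; [move/negbT; rewrite negbK | lia].
Qed.

Lemma runS_ge N (S : {set 'I_N.+1}) k : (forall i, i < k -> inS S (maxS S - i)) ->
  k <= N.+1 -> k <= runS S.
Proof. by move=> h hk; apply: find_iota_ge => // i /h ->. Qed.

Lemma runS_eq N (S : {set 'I_N.+1}) k : (forall i, i < k -> inS S (maxS S - i)) ->
  ~~ inS S (maxS S - k) -> k <= N -> runS S = k.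
Proof. by move=> h1 h2 h3; apply: find_iota_eq => // i /h1 ->. Qed.


Definition good {N} (S : {set 'I_N.+1}) : bool := [forall i : 'I_N.+1, (i \in S) ==> (1 < i)].

Lemma goodP N (S : {set 'I_N.+1}) : reflect (forall x, inS S x -> 1 < x) (good S).
Proof.
apply: (iffP forallP) => h.
  move=> x hx; have := h (inord x); rewrite in_inord //= inordK //.
  by rewrite ltnS (inS_le hx).
by move=> i; apply/implyP => iS; apply: h; rewrite inS_val.
Qed.

Lemma inS_ne0 N (S : {set 'I_N.+1}) x : inS S x -> S != set0.
Proof. by move=> h; apply/eqP => e; move: h; rewrite e inS0. Qed.

Definition d2 {N} n (S : {set 'I_N.+1}) := good S && (sumS S == n).
Definition X {N} n (S : {set 'I_N.+1}) := [&& d2 n S, S != set0 & inS S (maxS S - 1)].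

Definition exc1 {N} (S : {set 'I_N.+1}) :=
  (minS S == maxS S - runS S + 1) && (minS S == runS S).
Definition exc2 {N} (S : {set 'I_N.+1}) :=
  (minS S == maxS S - runS S + 1) && (minS S == (runS S).+1).
Definition opI {N} (S : {set 'I_N.+1}) :=
  inord (maxS S).+1 |: ((S :\ inord (minS S)) :\ inord (maxS S - minS S + 1)).
Definition opII {N} (S : {set 'I_N.+1}) :=
  inord (maxS S - runS S) |: (inord (runS S) |: (S :\ inord (maxS S))).
Definition phi {N} (S : {set 'I_N.+1}) :=
  if minS S <= runS S then (if exc1 S then S else opI S)
  else (if exc2 S then S else opII S).


Lemma Xfacts N n (S : {set 'I_N.+1}) : X n S ->
  [/\ [/\ inS S (maxS S), inS S (minS S), forall x, inS S x -> minS S <= x,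
         forall x, inS S x -> x <= maxS S & forall x, inS S x -> 1 < x],
      [/\ forall i, i < runS S -> inS S (maxS S - i), ~~ inS S (maxS S - runS S),
         2 <= runS S & runS S <= maxS S],
      sumS S = n, maxS S <= N &
      [/\ minS S <= maxS S - runS S + 1, 2 <= minS S & maxS S + minS S <= n]].
Proof.
case/and3P => /andP [/goodP g /eqP sn] ne hm1.
have hm := maxS_in ne.
have [hs hs2] := minS_spec hm.
have hsx : forall x, inS S x -> minS S <= x by move=> x /minS_spec [].
have n0 : ~~ inS S 0 by apply/negP => /g.
have [r1 [r2 r3]] := runS_spec ne n0.
have hr2 : 2 <= runS S.
  apply: runS_ge; last by have := inS_le hm; have := g _ hm; lia.
  move=> i hi; case: i hi => [|[|i]] hi //; by rewrite subn0.
have hsr : minS S <= maxS S - runS S + 1.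
  apply: hsx; have := r3 (runS S - 1); rewrite (_ : maxS S - (runS S - 1) = maxS S - runS S + 1).
    by apply; lia.
  lia.
have s2 := g _ hs.
split => //.
- by split => // x; apply: maxS_ub.
- exact: inS_le hm.
split => //; rewrite -sn addnC; apply: le_sumS2 => //; apply/eqP; lia.
Qed.


Lemma caseI N n (S : {set 'I_N.+1}) : X n S -> n <= N -> minS S <= runS S -> ~~ exc1 S ->
  [/\ X n (opI S), maxS (opI S) = (maxS S).+1, #|S| = (#|opI S|).+1 & phi (opI S) = S].
Proof.
move=> hX hN hsr; rewrite /exc1 => he.
have [[hm hs hsx hxm g] [rin rout r2 rm] sn mN [k1 k2 k3]] := Xfacts hX.
rewrite /opI.
set m := maxS S in hm hxm rin rout rm mN k1 k3 he *.
set s := minS S in hs hsx hsr k1 k2 k3 he *.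
set r := runS S in rin rout r2 rm hsr k1 he *.
have K1 : s < m - s + 1 by lia.
have mN1 : m.+1 <= N by lia.
set S' := inord m.+1 |: _.
have hmem : forall x, inS S' x = (x == m.+1) || ((x != m - s + 1) && ((x != s) && inS S x)).
  by move=> x; rewrite inS_U1 ?inS_D1 //; lia.
have hsa : inS S (m - s + 1).
  rewrite (_ : m - s + 1 = m - (s - 1)); last lia.
  apply: rin; lia.
have nm1 : ~~ inS S m.+1 by apply/negP => /hxm; lia.
have maxS' : maxS S' = m.+1.
  apply: maxS_eq; first by rewrite hmem eqxx.
  move=> x; rewrite hmem; case/orP => [/eqP -> //| /andP [_ /andP [_ /hxm]]]; lia.
have runS' : runS S' = s.
  apply: runS_eq; rewrite ?maxS'.
  - move=> i hi; rewrite hmem; case: i hi => [|i] hi; first by rewrite subn0 eqxx.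
    rewrite (_ : m.+1 - i.+1 = m - i); last lia.
    rewrite rin; last lia.
    apply/orP; right; apply/andP; split; apply/eqP; lia.
  - rewrite hmem; apply/negP => /orP [/eqP|/andP [/eqP]]; lia.
  - lia.
have minS' : s < minS S'.
  have h : inS S' m.+1 by rewrite hmem eqxx.
  have [h1 _] := minS_spec h.
  move: h1; rewrite hmem => /orP [/eqP -> //|]; first lia.
  case/andP => _ /andP [/eqP h2 /hsx h3]; lia.
have XS' : X n S'.
  apply/and3P; split.
  - apply/andP; split.
      apply/goodP => x; rewrite hmem => /orP [/eqP ->|/andP [_ /andP [_ /g]]] //; lia.
    rewrite /S' sumS_U1 //; last by rewrite inS_D1 ?inS_D1; lia.
    rewrite -sn (sumS_D1 hs) (@sumS_D1 _ (S :\ inord s) (m - s + 1)).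
      lia.
    rewrite inS_D1 ?hsa; last lia.
    apply/eqP; lia.
  - apply: (@inS_ne0 _ _ m.+1); by rewrite hmem eqxx.
  - rewrite maxS' hmem; apply/orP; right.
    rewrite (_ : m.+1 - 1 = m); last lia.
    rewrite hm andbT; apply/andP; split; apply/eqP; lia.
split => //.
- rewrite /S' cardS_U1; last by rewrite inS_D1 ?inS_D1; lia.
  + rewrite (cardS_D1 hs) (@cardS_D1 _ (S :\ inord s) (m - s + 1)) //.
    rewrite inS_D1 ?hsa; last lia.
    apply/eqP; lia.
  + lia.
- rewrite /phi runS' (_ : minS S' <= s = false); last by apply/negbTE; rewrite -ltnNge.
  rewrite (_ : exc2 S' = false); last first.
    rewrite /exc2 runS' maxS'; apply/negbTE; apply/negP => /andP [/eqP h1 /eqP h2]; lia.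
  rewrite /opII runS' maxS'.
  apply: setext => x.
  rewrite inS_U1; last lia.
  rewrite inS_U1; last lia.
  rewrite inS_D1; last lia.
  rewrite hmem.
  case: (eqVneq x (m - s + 1)) => [->|hxa].
    by rewrite hsa (_ : m - s + 1 == m.+1 - s); last (apply/eqP; lia).
  case: (eqVneq x s) => [->|hxs]; first by rewrite hs /= orbT.
  case: (eqVneq x m.+1) => [->|hxm1].
    by rewrite (negbTE nm1) /= orbF; apply/negbTE; apply/eqP; lia.
  rewrite /= (_ : (x == m.+1 - s) = false) //.
  apply/negbTE; apply/eqP; lia.
Qed.


Lemma caseII N n (S : {set 'I_N.+1}) : X n S -> n <= N -> runS S < minS S -> ~~ exc2 S ->
  [/\ X n (opII S), maxS (opII S) = maxS S - 1, #|opII S| = (#|S|).+1 & phi (opII S) = S].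
Proof.
move=> hX hN hsr; rewrite /exc2 => he.
have [[hm hs hsx hxm g] [rin rout r2 rm] sn mN [k1 k2 k3]] := Xfacts hX.
rewrite /opII.
set m := maxS S in hm hxm rin rout rm mN k1 k3 he *.
set s := minS S in hs hsx hsr k1 k2 k3 he *.
set r := runS S in rin rout r2 rm hsr k1 he *.
have sne : s != m - r by apply/eqP => e; move: rout; rewrite -e hs.
have K2 : r < m - r by lia.
set S' := inord (m - r) |: _.
have hmem : forall x, inS S' x = (x == m - r) || ((x == r) || ((x != m) && inS S x)).
  by move=> x; rewrite inS_U1 ?inS_U1 ?inS_D1 //; lia.
have nr : ~~ inS S r by apply/negP => /hsx; lia.
have maxS' : maxS S' = m - 1.
  apply: maxS_eq.
    rewrite hmem; apply/orP; right; apply/orP; right.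
    rewrite rin; last lia.
    rewrite andbT; apply/eqP; lia.
  move=> x; rewrite hmem; case/orP => [/eqP ->|]; first lia.
  case/orP => [/eqP ->|]; first lia.
  case/andP => /eqP h1 /hxm; lia.
have minS' : minS S' = r.
  apply: minS_eq; first by rewrite hmem eqxx orbT.
  move=> x; rewrite hmem; case/orP => [/eqP ->|]; first lia.
  case/orP => [/eqP -> //|].
  case/andP => _ /hsx; lia.
have runS' : r <= runS S'.
  apply: runS_ge; last lia.
  rewrite maxS' => i hi; rewrite hmem.
  case: (eqVneq i (r - 1)) => [->|hi1].
    by rewrite (_ : m - 1 - (r - 1) = m - r) ?eqxx //; lia.
  rewrite (_ : m - 1 - i = m - i.+1); last lia.
  rewrite rin; last lia.
  apply/orP; right; apply/orP; right; rewrite andbT; apply/eqP; lia.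
have gS' : good S'.
  apply/goodP => x; rewrite hmem.
  case/orP => [/eqP ->|]; first lia.
  case/orP => [/eqP ->|]; first lia.
  by case/andP => _ /g.
have XS' : X n S'.
  have ne' : S' != set0 by apply: (@inS_ne0 _ _ r); rewrite hmem eqxx orbT.
  apply/and3P; split => //.
  - rewrite /d2 gS' /=.
    rewrite /S' sumS_U1; first last.
    + by rewrite inS_U1 ?inS_D1; lia.
    + lia.
    rewrite sumS_U1; first last.
    + by rewrite inS_D1 ?(negbTE nr) ?andbF; lia.
    + lia.
    rewrite -sn (sumS_D1 hm); apply/eqP; lia.
  - have n0 : ~~ inS S' 0 by apply/negP => /(goodP _ gS').
    have [_ [_ rin']] := runS_spec ne' n0.
    apply: rin'; lia.
split => //.
- rewrite /S' cardS_U1; first last.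
  + by rewrite inS_U1 ?inS_D1; lia.
  + lia.
  rewrite cardS_U1; first last.
  + by rewrite inS_D1 ?(negbTE nr) ?andbF; lia.
  + lia.
  by rewrite (cardS_D1 hm).
- rewrite /phi minS' runS' (_ : exc1 S' = false); last first.
    rewrite /exc1 minS' maxS'; apply/negbTE; apply/negP => /andP [/eqP h1 /eqP h2]; lia.
  rewrite /opI minS' maxS'.
  apply: setext => x.
  rewrite inS_U1; last lia.
  rewrite inS_D1; last lia.
  rewrite inS_D1; last lia.
  rewrite hmem (_ : (m - 1).+1 = m); last lia.
  rewrite (_ : m - 1 - r + 1 = m - r); last lia.
  case: (eqVneq x m) => [->|hxm1]; first by rewrite hm.
  case: (eqVneq x (m - r)) => [->|hxa]; first by rewrite (negbTE rout) /= ?andbF.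
  case: (eqVneq x r) => [->|hxs]; first by rewrite (negbTE nr) /= ?andbF.
  by [].
Qed.


Lemma phiP N n (S : {set 'I_N.+1}) : X n S -> n <= N ->
  [/\ X n (phi S), phi (phi S) = S &
     (phi S = S \/ (odd (maxS (phi S)) = ~~ odd (maxS S) /\ odd #|phi S| = ~~ odd #|S|))].
Proof.
move=> hX hN.
have [[hm _ _ _ g] _ _ _ _] := Xfacts hX.
have m2 := g _ hm.
case: (leqP (minS S) (runS S)) => hsr.
  case he: (exc1 S).
    have e : phi S = S by rewrite /phi hsr he.
    by rewrite e e; split => //; left.
  have e : phi S = opI S by rewrite /phi hsr he.
  have [h1 h2 h3 h4] := caseI hX hN hsr (negbT he).
  rewrite e h4; split => //; right; rewrite h2 h3 /= negbK; done.
have hsr' : (minS S <= runS S) = false by apply/negbTE; rewrite -ltnNge.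
case he: (exc2 S).
  have e : phi S = S by rewrite /phi hsr' he.
  by rewrite e e; split => //; left.
have e : phi S = opII S by rewrite /phi hsr' he.
have [h1 h2 h3 h4] := caseII hX hN hsr (negbT he).
rewrite e h4; split => //; right; rewrite h2 h3 /=; split => //.
rewrite oddB; last lia.
by rewrite addbT.
Qed.

Lemma phi_fixed N n (S : {set 'I_N.+1}) : X n S -> n <= N -> phi S = S ->
  (minS S <= runS S /\ exc1 S) \/ (runS S < minS S /\ exc2 S).
Proof.
move=> hX hN hf.
have [[hm _ _ _ g] _ _ _ _] := Xfacts hX.
have m2 := g _ hm.
case: (leqP (minS S) (runS S)) => hsr.
  case he: (exc1 S); first by left.
  have e : phi S = opI S by rewrite /phi hsr he.
  have [h1 h2 h3 h4] := caseI hX hN hsr (negbT he).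
  by move: h2; rewrite -e hf; lia.
have hsr' : (minS S <= runS S) = false by apply/negbTE; rewrite -ltnNge.
case he: (exc2 S); first by right.
have e : phi S = opII S by rewrite /phi hsr' he.
have [h1 h2 h3 h4] := caseII hX hN hsr (negbT he).
by move: h2; rewrite -e hf; lia.
Qed.

Definition J {N} a k : {set 'I_N.+1} := [set i : 'I_N.+1 | a <= i < a + k].

Lemma inS_J N a k x : inS (J a k : {set 'I_N.+1}) x = (x <= N) && (a <= x < a + k).
Proof.
rewrite /inS /J in_set; case: (leqP x N) => hx //=.
by rewrite inordK.
Qed.

Lemma J_S N a k : a + k <= N -> (J a k.+1 : {set 'I_N.+1}) = inord (a + k) |: J a k.
Proof.
move=> h; apply: setext => x; rewrite inS_U1 // !inS_J.
apply/idP/idP => H; lia.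
Qed.

Lemma J_0 N a : (J a 0 : {set 'I_N.+1}) = set0.
Proof. by apply: setext => x; rewrite inS_J inS0; apply/negbTE; apply/negP; lia. Qed.

Lemma sumS_J N a k : a + k <= N.+1 ->
  sumS (J a k : {set 'I_N.+1}) = \sum_(i < k) (a + i) /\ #|(J a k : {set 'I_N.+1})| = k.
Proof.
elim: k => [|k IH] h.
  by rewrite J_0 /sumS big_set0 big_ord0 cards0.
have [IH1 IH2] := IH (ltac:(lia)).
have hn : ~~ inS (J a k : {set 'I_N.+1}) (a + k) by rewrite inS_J; apply/negP; lia.
rewrite J_S; last lia.
rewrite sumS_U1 ?cardS_U1 //; try lia.
by rewrite IH1 IH2 big_ord_recr /= addnC.
Qed.

Definition u r := \sum_(i < r) (r + i).
Definition v r := \sum_(i < r) (r.+1 + i).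

Lemma vE r : v r = u r + r.
Proof.
rewrite /v /u.
have -> : \sum_(i < r) (r.+1 + i) = \sum_(i < r) ((r + i) + 1)%N.
  by apply: eq_bigr => i _; lia.
by rewrite big_split /= sum_nat_const card_ord muln1.
Qed.

Lemma uS r : u r.+1 = u r + 3 * r + 1.
Proof.
have := vE r; rewrite /u /v big_ord_recr /= => ->; lia.
Qed.

Lemma u0 : u 0 = 0. Proof. by rewrite /u big_ord0. Qed.

Lemma u_mono a b : a <= b -> u a <= u b.
Proof.
elim: b => [|b IH] h; first by rewrite (_ : a = 0) //; lia.
case: (eqVneq a b.+1) => [-> //|hne].
have := IH (ltac:(lia)); rewrite uS; lia.
Qed.

Lemma u_lt a b : a < b -> u a < u b.
Proof. move=> h; have := u_mono h; rewrite uS; have := u_mono (leqnn a); lia. Qed.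

Lemma u_inj a b : u a = u b -> a = b.
Proof.
move=> e; case: (ltngtP a b) => // h; [have := u_lt h | have := u_lt h]; lia.
Qed.

Lemma v_inj a b : v a = v b -> a = b.
Proof.
rewrite !vE => e; case: (ltngtP a b) => // h; [have := u_lt h | have := u_lt h]; lia.
Qed.

Lemma uv_ne a b : 0 < a -> u a != v b.
Proof.
move=> ha; rewrite vE; case: (leqP a b) => h.
  have := u_mono h; apply/contraTneq => e; lia.
have := u_mono h; rewrite uS; apply/contraTneq => e; lia.
Qed.

Lemma u_ge r : r.*2.-1 <= u r.
Proof. case: r => [|r] //; rewrite uS; lia. Qed.


Lemma fixed_J N n (S : {set 'I_N.+1}) : X n S -> n <= N -> phi S = S ->
  exists2 r, 2 <= r & (S = J r r /\ n = u r) \/ (S = J r.+1 r /\ n = v r).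
Proof.
move=> hX hN hf.
have [[hm hs hsx hxm g] [rin rout r2 rm] sn mN [k1 k2 k3]] := Xfacts hX.
exists (runS S) => //.
have key : forall a, a + runS S - 1 = maxS S -> minS S = a -> S = J a (runS S).
  move=> a ha hsa; apply: setext => x; rewrite inS_J.
  apply/idP/idP.
    move=> hx; have := hsx _ hx; have := hxm _ hx; have := inS_le hx; lia.
  move=> /andP [xN /andP [h1 h2]].
  rewrite (_ : x = maxS S - (maxS S - x)); last lia.
  apply: rin; lia.
case: (phi_fixed hX hN hf) => [[hsr /andP [/eqP e1 /eqP e2]]|[hsr /andP [/eqP e1 /eqP e2]]].
  left; have e : S = J (runS S) (runS S) by apply: key; lia.
  split => //.
  rewrite -sn {1}e; have [-> _] := sumS_J (N := N) (a := runS S) (k := runS S) (ltac:(lia)).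
  done.
right; have e : S = J (runS S).+1 (runS S) by apply: key; lia.
split => //.
rewrite -sn {1}e; have [-> _] := sumS_J (N := N) (a := (runS S).+1) (k := runS S) (ltac:(lia)).
done.
Qed.

Lemma J_props N a k : 2 <= a -> 1 < k -> a <= k.+1 -> a + k <= N.+1 ->
  let S := (J a k : {set 'I_N.+1}) in
  [/\ X (sumS S) S, maxS S = a + k - 1, minS S = a, runS S = k & #|S| = k].
Proof.
move=> ha hk hak haN S.
have hmem : forall x, inS S x = (x <= N) && (a <= x < a + k) by move=> x; rewrite inS_J.
have mx : maxS S = a + k - 1.
  apply: maxS_eq; first by rewrite hmem; lia.
  by move=> x; rewrite hmem; lia.
have mn : minS S = a.
  apply: minS_eq; first by rewrite hmem; lia.
  by move=> x; rewrite hmem; lia.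
have rn : runS S = k.
  apply: runS_eq; rewrite ?mx; try lia.
    by move=> i hi; rewrite hmem; lia.
  by rewrite hmem; lia.
have [_ cd] := sumS_J (N := N) (a := a) (k := k) haN.
split => //.
apply/and3P; split.
- rewrite /d2 eqxx andbT; apply/goodP => x; rewrite hmem; lia.
- by apply: (@inS_ne0 _ _ a); rewrite hmem; lia.
- by rewrite mx hmem; lia.
Qed.

Lemma Ju_fixed N k : 2 <= k -> u k <= N ->
  let S := (J k k : {set 'I_N.+1}) in
  [/\ X (u k) S, phi S = S, maxS S = k + k - 1 & #|S| = k].
Proof.
move=> hk hu S.
have hb := u_ge k.
have [h1 h2 h3 h4 h5] := J_props (N := N) (a := k) (k := k) hk hk (ltac:(lia)) (ltac:(lia)).
have [hs _] := sumS_J (N := N) (a := k) (k := k) (ltac:(lia)).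
rewrite -/S hs in h1.
split => //.
by rewrite /phi h3 h4 leqnn /exc1 h2 h3 h4 (_ : k + k - 1 - k + 1 = k) ?eqxx //; lia.
Qed.

Lemma Jv_fixed N k : 2 <= k -> v k <= N ->
  let S := (J k.+1 k : {set 'I_N.+1}) in
  [/\ X (v k) S, phi S = S, maxS S = k + k & #|S| = k].
Proof.
move=> hk hv S.
have hb := u_ge k; have hvE := vE k.
have [h1 h2 h3 h4 h5] := J_props (N := N) (a := k.+1) (k := k) (ltac:(lia)) hk (ltac:(lia)) (ltac:(lia)).
have [hs _] := sumS_J (N := N) (a := k.+1) (k := k) (ltac:(lia)).
rewrite -/S hs in h1.
have e : maxS S = k + k by rewrite h2; lia.
split => //.
rewrite /phi h3 h4 (_ : k.+1 <= k = false); last by rewrite ltnn.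
by rewrite /exc2 e h3 h4 (_ : k + k - k + 1 = k.+1) ?eqxx //; lia.
Qed.

Local Open Scope ring_scope.
Lemma sum_invol (T : finType) (P : pred T) (f : T -> T) (F : T -> int) :
  (forall x, P x -> P (f x)) -> (forall x, P x -> f (f x) = x) ->
  (forall x, P x -> f x != x -> F (f x) = (- F x)%R) ->
  \sum_(x | P x) F x = \sum_(x | P x && (f x == x)) F x.
Proof.
move=> hP hf hF.
rewrite (bigID (fun x => f x == x)) /=.
have e : \sum_(x | P x && ~~ (f x == x)) F x = (- \sum_(x | P x && ~~ (f x == x)) F x)%R.
  rewrite {1}(reindex_onto f f (P := fun x => P x && ~~ (f x == x))); last first.
    by move=> x /andP [px _]; apply: hf.
  rewrite -sumrN; apply: eq_big => j.
    apply/idP/idP.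
      case/andP => /andP [pf nf] /eqP e.
      have pj : P j by rewrite -e; apply: hP.
      by rewrite pj /=; move: nf; rewrite e eq_sym.
    case/andP => pj nj; rewrite hP //= hf // eqxx andbT.
    by rewrite eq_sym.
  case/andP => /andP [pf nf] /eqP e.
  have pj : P j by rewrite -e; apply: hP.
  apply: hF => //; by rewrite eq_sym -{1}e.
have -> : \sum_(x | P x && ~~ (f x == x)) F x = 0 by lia.
by rewrite GRing.addr0.
Qed.

Local Close Scope ring_scope.
Definition Fx N n : int := (\sum_(S : {set 'I_N.+1} | X n S) (-1) ^+ maxS S)%R.
Definition Gx N n : int := (\sum_(S : {set 'I_N.+1} | X n S) (-1) ^+ #|S|)%R.

Lemma sign_flip (a b : nat) : odd a = ~~ odd b -> ((-1) ^+ a = - ((-1) ^+ b) :> int)%R.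
Proof. by move=> h; rewrite -signr_odd h -(signr_odd _ b); case: (odd b). Qed.

Lemma Fx_fix N n : n <= N ->
  Fx N n = (\sum_(S : {set 'I_N.+1} | X n S && (phi S == S)) (-1) ^+ maxS S)%R.
Proof.
move=> hN; apply: sum_invol.
- by move=> S hX; case: (phiP hX hN).
- by move=> S hX; case: (phiP hX hN).
- move=> S hX hne; case: (phiP hX hN) => _ _ [e|[h _]]; first by rewrite e eqxx in hne.
  exact: sign_flip.
Qed.

Lemma Gx_fix N n : n <= N ->
  Gx N n = (\sum_(S : {set 'I_N.+1} | X n S && (phi S == S)) (-1) ^+ #|S|)%R.
Proof.
move=> hN; apply: sum_invol.
- by move=> S hX; case: (phiP hX hN).
- by move=> S hX; case: (phiP hX hN).
- move=> S hX hne; case: (phiP hX hN) => _ _ [e|[_ h]]; first by rewrite e eqxx in hne.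
  exact: sign_flip.
Qed.

Lemma FG_u N n k : n <= N -> 2 <= k -> n = u k -> Fx N n = (-1)%R /\ Gx N n = ((-1) ^+ k)%R.
Proof.
move=> hN hk en.
have [h1 h2 h3 h4] := Ju_fixed (N := N) hk (ltac:(lia)).
have hp : forall S : {set 'I_N.+1}, (X n S && (phi S == S)) = (S == J k k).
  move=> S; apply/idP/idP.
    case/andP => hX /eqP hf; have [r r2 [[-> e]|[-> e]]] := fixed_J hX hN hf.
      by rewrite (u_inj (esym (etrans (esym en) e))).
    by have := uv_ne r (ltac:(lia) : 0 < k); rewrite -en e eqxx.
  by move/eqP ->; rewrite en h1 h2 eqxx.
rewrite Fx_fix // Gx_fix // (big_pred1 (J k k) hp) (big_pred1 (J k k) hp) h3 h4.
split => //.
rewrite -signr_odd oddB ?oddD ?addbb //; lia.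
Qed.

Lemma FG_v N n k : n <= N -> 2 <= k -> n = v k -> Fx N n = 1%R /\ Gx N n = ((-1) ^+ k)%R.
Proof.
move=> hN hk en.
have [h1 h2 h3 h4] := Jv_fixed (N := N) hk (ltac:(lia)).
have hp : forall S : {set 'I_N.+1}, (X n S && (phi S == S)) = (S == J k.+1 k).
  move=> S; apply/idP/idP.
    case/andP => hX /eqP hf; have [r r2 [[-> e]|[-> e]]] := fixed_J hX hN hf.
      by have := uv_ne k (ltac:(lia) : 0 < r); rewrite -e en eqxx.
    by rewrite (v_inj (esym (etrans (esym en) e))).
  by move/eqP ->; rewrite en h1 h2 eqxx.
rewrite Fx_fix // Gx_fix // (big_pred1 (J k.+1 k) hp) (big_pred1 (J k.+1 k) hp) h3 h4.
split => //.
by rewrite -signr_odd oddD addbb.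
Qed.

Lemma FG_0 N n : n <= N -> (forall k, 2 <= k -> n != u k /\ n != v k) ->
  Fx N n = 0%R /\ Gx N n = 0%R.
Proof.
move=> hN h.
have hp : forall S : {set 'I_N.+1}, (X n S && (phi S == S)) = false.
  move=> S; apply/negbTE/negP => /andP [hX /eqP hf].
  have [r r2 [[_ e]|[_ e]]] := fixed_J hX hN hf; have := h r r2; rewrite e eqxx; by case.
by rewrite Fx_fix // Gx_fix // !big_pred0.
Qed.


Lemma sum_bij (T : finType) (P Q : pred T) (f g : T -> T) (F : T -> int) :
  (forall x, Q x -> P (f x)) -> (forall x, P x -> Q (g x)) ->
  (forall x, Q x -> g (f x) = x) -> (forall x, P x -> f (g x) = x) ->
  (\sum_(x | P x) F x = \sum_(x | Q x) F (f x))%R.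
Proof.
move=> h1 h2 h3 h4.
rewrite (reindex_onto f g (P := P)) //; apply: eq_bigl => x.
apply/idP/idP.
  by case/andP => px /eqP e; rewrite -e; apply: h2.
by move=> qx; rewrite h1 //= h3.
Qed.

Definition shf {N} (T : {set 'I_N.+1}) := inord (maxS T).+1 |: (T :\ inord (maxS T)).
Definition shf2 {N} (S : {set 'I_N.+1}) := inord (maxS S - 1) |: (S :\ inord (maxS S)).

Definition Y {N} n (S : {set 'I_N.+1}) :=
  [&& d2 n S, S != set0, ~~ inS S (maxS S - 1) & 2 < maxS S].
Definition Z {N} n (S : {set 'I_N.+1}) :=
  [&& d2 n S, S != set0, ~~ inS S (maxS S - 1) & maxS S <= 2].

Lemma sig_props N n (T : {set 'I_N.+1}) : n < N -> d2 n T -> T != set0 ->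
  [/\ Y n.+1 (shf T), shf2 (shf T) = T, maxS (shf T) = (maxS T).+1 & #|shf T| = #|T|].
Proof.
move=> hN /andP [/goodP g /eqP sn] ne.
have hm := maxS_in ne.
have hxm : forall x, inS T x -> x <= maxS T by move=> x; apply: maxS_ub.
set m := maxS T in hm hxm *.
have m2 := g _ hm.
have mn : m <= n by rewrite -sn; apply: le_sumS.
rewrite /shf -/m.
set S := inord m.+1 |: _.
have hmem : forall x, inS S x = (x == m.+1) || ((x != m) && inS T x).
  by move=> x; rewrite inS_U1 ?inS_D1 //; lia.
have nm1 : ~~ inS T m.+1 by apply/negP => /hxm; lia.
have mx : maxS S = m.+1.
  apply: maxS_eq; first by rewrite hmem eqxx.
  move=> x; rewrite hmem => /orP [/eqP ->//|/andP [_ /hxm]]; lia.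
split => //.
- apply/and4P; split.
  + apply/andP; split.
      apply/goodP => x; rewrite hmem => /orP [/eqP ->|/andP [_ /g]] //; lia.
    rewrite sumS_U1; first last.
      by rewrite inS_D1 ?(negbTE nm1) ?andbF //; lia.
      lia.
    by rewrite -sn (sumS_D1 hm); apply/eqP; lia.
  + by apply: (@inS_ne0 _ _ m.+1); rewrite hmem eqxx.
  + by rewrite mx hmem subn1 /= eqxx /= orbF; apply/negP => /eqP; lia.
  + by rewrite mx; lia.
- rewrite /shf2 mx; apply: setext => x.
  rewrite inS_U1; last lia.
  rewrite inS_D1; last lia.
  rewrite hmem subn1 /=.
  case: (eqVneq x m) => [->|hx]; first by rewrite hm.
  case: (eqVneq x m.+1) => [->|hx1] //=.
  by rewrite (negbTE nm1).
- rewrite cardS_U1; first last.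
    by rewrite inS_D1 ?(negbTE nm1) ?andbF //; lia.
    lia.
  by rewrite (cardS_D1 hm).
Qed.

Lemma shf2_props N n (S : {set 'I_N.+1}) : n < N -> Y n.+1 S ->
  [/\ d2 n (shf2 S), shf2 S != set0 & shf (shf2 S) = S].
Proof.
move=> hN /and4P [/andP [/goodP g /eqP sn] ne hm1 m3].
have hm := maxS_in ne.
have hxm : forall x, inS S x -> x <= maxS S by move=> x; apply: maxS_ub.
set m := maxS S in hm hxm hm1 m3 *.
have mN := inS_le hm.
rewrite /shf2 -/m.
set T := inord (m - 1) |: _.
have hmem : forall x, inS T x = (x == m - 1) || ((x != m) && inS S x).
  by move=> x; rewrite inS_U1 ?inS_D1 //; lia.
have mx : maxS T = m - 1.
  apply: maxS_eq; first by rewrite hmem eqxx.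
  move=> x; rewrite hmem => /orP [/eqP ->//|/andP [/eqP h1 h2]].
  have := hxm _ h2; case: (eqVneq x (m - 1)) => [e|hne]; first lia.
  lia.
split.
- apply/andP; split.
    apply/goodP => x; rewrite hmem => /orP [/eqP ->|/andP [_ /g]] //; lia.
  rewrite sumS_U1; first last.
    by rewrite inS_D1 ?(negbTE hm1) ?andbF //; lia.
    lia.
  by move: sn; rewrite (sumS_D1 hm) => sn; apply/eqP; lia.
- by apply: (@inS_ne0 _ _ (m - 1)); rewrite hmem eqxx.
- rewrite /shf mx; apply: setext => x.
  rewrite inS_U1; last lia.
  rewrite inS_D1; last lia.
  rewrite hmem (_ : (m - 1).+1 = m); last lia.
  case: (eqVneq x m) => [->|hx]; first by rewrite hm.
  case: (eqVneq x (m - 1)) => [->|hx1] //=.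
  by rewrite (negbTE hm1).
Qed.

Definition A N n : int := (\sum_(S : {set 'I_N.+1} | d2 n S && (S != set0)) (-1) ^+ maxS S)%R.
Definition D N n : int := (\sum_(S : {set 'I_N.+1} | d2 n S) (-1) ^+ #|S|)%R.

Lemma split3 N n (F : {set 'I_N.+1} -> int) :
  (\sum_(S | d2 n S && (S != set0)) F S =
   \sum_(S | X n S) F S + \sum_(S | Y n S) F S + \sum_(S | Z n S) F S)%R.
Proof.
rewrite (bigID (fun S => inS S (maxS S - 1))) /=.
rewrite (bigID (fun S => 2 < maxS S) (fun S => _ && ~~ _)) /= GRing.addrA.
congr (_ + _ + _)%R; apply: eq_bigl => S.
- by rewrite /X andbA.
- by rewrite /Y !andbA.
- by rewrite /Z !andbA -leqNgt.
Qed.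

Definition S2 {N} : {set 'I_N.+1} := inord 2 |: set0.

Lemma Z_char N n (S : {set 'I_N.+1}) : 2 <= N -> Z n S = (n == 2) && (S == S2).
Proof.
move=> hN; apply/idP/idP.
  case/and4P => /andP [/goodP g /eqP sn] ne _ m2.
  have hm := maxS_in ne.
  have e : S = S2.
    apply: setext => x; rewrite /S2 inS_U1 // inS0 orbF.
    apply/idP/idP.
      by move=> hx; have := g _ hx; have := maxS_ub hx; lia.
    move/eqP => ->; have e2 : maxS S = 2 by have := g _ hm; lia.
    by rewrite -e2.
  rewrite e eqxx andbT; move: sn; rewrite e /S2 sumS_U1 ?inS0 //.
  by rewrite /sumS big_set0 => <-.
case/andP => /eqP -> /eqP ->.
have hmem : forall x, inS (S2 : {set 'I_N.+1}) x = (x == 2) by move=> x; rewrite /S2 inS_U1 // inS0 orbF.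
have mx : maxS (S2 : {set 'I_N.+1}) = 2 by apply: maxS_eq; [rewrite hmem | move=> x; rewrite hmem => /eqP ->].
apply/and4P; split.
- apply/andP; split; first by apply/goodP => x; rewrite hmem => /eqP ->.
  by rewrite /S2 sumS_U1 ?inS0 // /sumS big_set0.
- by apply: (@inS_ne0 _ _ 2); rewrite hmem.
- by rewrite mx hmem.
- by rewrite mx.
Qed.

Lemma S2_props N : 2 <= N -> maxS (S2 : {set 'I_N.+1}) = 2 /\ #|(S2 : {set 'I_N.+1})| = 1.
Proof.
move=> hN.
have hmem : forall x, inS (S2 : {set 'I_N.+1}) x = (x == 2) by move=> x; rewrite /S2 inS_U1 // inS0 orbF.
split; first by apply: maxS_eq; [rewrite hmem | move=> x; rewrite hmem => /eqP ->].
by rewrite /S2 cardS_U1 ?inS0 // cards0.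
Qed.

Lemma Z_imp N n (S : {set 'I_N.+1}) : Z n S -> n = 2.
Proof.
move=> hZ; move: (hZ) => /and4P [/andP [/goodP g _] ne _ m2].
have hm := maxS_in ne.
have e2 : maxS S = 2 by have := g _ hm; lia.
have hN : 2 <= N by have := inS_le hm; rewrite e2.
by move: hZ; rewrite Z_char // => /andP [/eqP].
Qed.

Lemma sumZ N n (F : {set 'I_N.+1} -> int) : n <= N ->
  (\sum_(S | Z n S) F S = if n == 2 then F S2 else 0)%R.
Proof.
move=> hN; case: (eqVneq n 2) => [e|hn].
  subst n; apply: big_pred1 => S; rewrite /= Z_char ?eqxx //.
by apply: big_pred0 => S; apply/negbTE/negP => /Z_imp e; rewrite e eqxx in hn.
Qed.

Lemma sumY N n (F : {set 'I_N.+1} -> int) : n < N ->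
  (\sum_(S | Y n.+1 S) F S = \sum_(T | d2 n T && (T != set0)) F (shf T))%R.
Proof.
move=> hN; apply: (sum_bij (g := shf2)).
- by move=> T /andP [h1 h2]; case: (sig_props hN h1 h2).
- by move=> S hS; case: (shf2_props hN hS) => h1 h2 _; rewrite h1 h2.
- by move=> T /andP [h1 h2]; case: (sig_props hN h1 h2).
- by move=> S hS; case: (shf2_props hN hS).
Qed.

Lemma empty_sum N n : (\sum_(S : {set 'I_N.+1} | d2 n S && (S == set0)) (-1) ^+ #|S| =
   if n == 0 then 1 else 0 :> int)%R.
Proof.
case: (eqVneq n 0) => [->|hn].
  rewrite (big_pred1 (set0 : {set 'I_N.+1})) ?cards0 // => S /=.
  case: (eqVneq S set0) => [->|] /=; last by rewrite andbF.
  rewrite andbT; apply/andP; split; [apply/goodP => x; by rewrite inS0 | by rewrite /sumS big_set0].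
apply: big_pred0 => S; case: (eqVneq S set0) => [->|]; last by rewrite andbF.
by rewrite /d2 /sumS big_set0 andbT eq_sym (negbTE hn) andbF.
Qed.

Lemma R1 N n : n < N -> (A N n.+1 = Fx N n.+1 - A N n + (if n.+1 == 2 then 1 else 0))%R.
Proof.
move=> hN.
rewrite /A split3 -/(Fx N n.+1) sumY // sumZ //.
have -> : (\sum_(T : {set 'I_N.+1} | d2 n T && (T != set0)) (-1) ^+ maxS (shf T) =
   - \sum_(T : {set 'I_N.+1} | d2 n T && (T != set0)) (-1) ^+ maxS T :> int)%R.
  rewrite -sumrN; apply: eq_bigr => T /andP [h1 h2].
  by have [_ _ -> _] := sig_props hN h1 h2; rewrite exprS mulN1r.
case: (eqVneq n.+1 2) => [e|] //.
by have [-> _] := S2_props (N := N) (ltac:(lia)).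
Qed.

Lemma D_split N n : (D N n = (if n == 0 then 1 else 0) +
   \sum_(S : {set 'I_N.+1} | d2 n S && (S != set0)) (-1) ^+ #|S|)%R.
Proof. by rewrite /D (bigID (fun S => S == set0)) /= empty_sum. Qed.

Lemma R2 N n : n < N -> (D N n.+1 = Gx N n.+1 + D N n - (if n == 0 then 1 else 0)
   - (if n.+1 == 2 then 1 else 0))%R.
Proof.
move=> hN.
rewrite D_split /= GRing.add0r split3 -/(Gx N n.+1) sumY // sumZ //.
rewrite (D_split N n).
have -> : (\sum_(T : {set 'I_N.+1} | d2 n T && (T != set0)) (-1) ^+ #|shf T| =
   \sum_(T : {set 'I_N.+1} | d2 n T && (T != set0)) (-1) ^+ #|T| :> int)%R.
  apply: eq_bigr => T /andP [h1 h2].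
  by have [_ _ _ ->] := sig_props hN h1 h2.
case: (eqVneq n.+1 2) => [e|] //.
  have [_ ->] := S2_props (N := N) (ltac:(lia)).
  rewrite expr1; set c := (if n == 0 then _ else _); set q := (\sum_(_ | _) _)%R; lia.
set c := (if n == 0 then _ else _); set q := (\sum_(_ | _) _)%R; lia.
Qed.


Lemma has_oneE N (S : {set 'I_N.+1}) : 1 <= N -> has_one S = inS S 1.
Proof.
move=> hN; apply/existsP/idP.
  by case=> i /andP [iS /eqP e]; rewrite -e inS_val.
by move=> h; exists (inord 1); rewrite in_inord //= inordK.
Qed.

Lemma ord0E N (S : {set 'I_N.+1}) : (ord0 \in S) = inS S 0.
Proof. by rewrite -inS_val. Qed.

Lemma goodE N (S : {set 'I_N.+1}) : good S = (ord0 \notin S) && ~~ inS S 1.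
Proof.
rewrite ord0E; apply/goodP/idP.
  by move=> h; apply/andP; split; apply/negP => /h.
case/andP => h0 h1 x hx; case: x hx => [|[|x]] hx //.
  by rewrite hx in h0.
by rewrite hx in h1.
Qed.

Lemma signE m : ((if ~~ odd m then 1 else -1) = (-1) ^+ m :> int)%R.
Proof. by rewrite -signr_odd; case: (odd m). Qed.

Lemma MeMo_sum n : (Posz (Me n) - Posz (Mo n) =
  \sum_(S in dpart n) (if crank_even S then 1 else -1))%R.
Proof.
rewrite (bigID (@crank_even n)) /=.
have e1 : (\sum_(S | (S \in dpart n) && crank_even S) (1 : int) = Posz (Me n))%R.
  rewrite (eq_bigl (fun S => S \in [set S in dpart n | crank_even S])); last by move=> S; rewrite inE.
  by rewrite sumr_const /Me; lia.
have e2 : (\sum_(S | (S \in dpart n) && ~~ crank_even S) (-1 : int) = - Posz (Mo n))%R.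
  rewrite (eq_bigl (fun S => S \in [set S in dpart n | ~~ crank_even S])); last by move=> S; rewrite inE.
  by rewrite sumr_const /Mo; lia.
rewrite -e1 -e2; congr (_ + _)%R; apply: eq_bigr => S /andP [_].
  by move=> ->.
by move/negbTE ->.
Qed.

Lemma abs_parity k : odd `|(Posz k.+1 - 2)%R|%N = ~~ odd k.
Proof.
case: k => [|k] //.
by rewrite (_ : (Posz k.+2 - 2)%R = Posz k) //; lia.
Qed.

Lemma MeMo_AD k : (Posz (Me k.+1) - Posz (Mo k.+1) = A k.+1 k.+1 - D k.+1 k)%R.
Proof.
set n := k.+1.
have hN : 1 <= n by [].
rewrite MeMo_sum (bigID (@has_one n)) /= addrC; congr (_ + _)%R.
- rewrite /A; apply: eq_big => S.
    rewrite inE /d2 goodE -/(sumS S) has_oneE //.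
    case: (eqVneq S set0) => [->|ne].
      by rewrite /sumS big_set0 !andbF.
    by rewrite andbT -!andbA; congr (_ && _); rewrite andbC.
  case/andP => _ h1; rewrite /crank_even /dcrank (negbTE h1) /=.
  exact: signE.
- rewrite /D -sumrN.
  rewrite (@sum_bij _ (fun S => (S \in dpart n) && has_one S) (fun T => d2 k T) (fun T => inord 1 |: T) (fun S => S :\ inord 1) (fun S => if crank_even S then 1 else -1)%R).
  - apply: eq_bigr => T gT; move: (gT) => /andP [+ _]; rewrite goodE => /andP [_ h1].
    rewrite /crank_even /dcrank has_oneE // inS_U1 // eqxx /=.
    rewrite cardS_U1 // abs_parity negbK.
    by rewrite -signr_odd; case: (odd #|T|).
  - move=> T /andP [gT /eqP sn]; move: (gT); rewrite goodE => /andP [h0 h1].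
    rewrite inE has_oneE // inS_U1 // eqxx andbT -/(sumS _) sumS_U1 // sn.
    rewrite ord0E inS_U1 // /= -ord0E h0 /=.
    by apply/eqP; lia.
  - move=> S /andP [hS h1]; move: hS; rewrite inE ord0E -/(sumS S) has_oneE // in h1 *.
    case/andP => h0 /eqP sn.
    rewrite /d2 goodE ord0E !inS_D1 // (negbTE h0) eqxx /=.
    by have := sumS_D1 h1; rewrite sn => e; apply/eqP; lia.
  - move=> T /andP [gT _]; move: gT; rewrite goodE => /andP [_ h1].
    apply: setext => x; rewrite inS_D1 // inS_U1 //.
    by case: (eqVneq x 1) => [->|] //=; rewrite (negbTE h1).
  - move=> S /andP [_ h1]; rewrite has_oneE // in h1.
    apply: setext => x; rewrite inS_U1 // inS_D1 //.
    by case: (eqVneq x 1) => [->|].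
Qed.


Definition sg n : int := if odd n then (-1)%R else 1%R.
Lemma sgE n : ((-1) ^+ n = sg n :> int)%R.
Proof. by rewrite -signr_odd /sg; case: odd. Qed.

Definition gam r : int := match (r %% 4)%N with O => (-2)%R | S (S O) => 2%R | _ => 0%R end.
Definition del r : int := match (r %% 4)%N with S O | S (S O) => 1%R | _ => (-1)%R end.

Lemma odd_u r : odd (u r) = (r %% 4 == 1) || (r %% 4 == 2).
Proof. elim: r => [|r IH]; first by rewrite u0. rewrite uS; lia. Qed.

Lemma odd_v r : odd (v r) = (r %% 4 == 2) || (r %% 4 == 3).
Proof. rewrite vE; have := odd_u r; lia. Qed.

Lemma id_u r : 2 <= r -> ((-1) - sg (u r - 1) * del (r - 1) = sg (u r) * gam r)%R.
Proof.
move=> hr; have hu := u_ge r; have := odd_u r.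
rewrite /sg /gam /del (_ : odd (u r - 1) = ~~ odd (u r)); last by rewrite oddB ?addbT //; lia.
have : (r - 1) %% 4 = (r %% 4 + 3) %% 4 by lia.
have : r %% 4 < 4 by lia.
case: (r %% 4) => [|[|[|[|t]]]] //= _ -> ->; reflexivity.
Qed.

Lemma id_v r : 1 <= r -> (gam r + sg (v r) = del r)%R.
Proof.
move=> hr; have := odd_v r; rewrite /sg /gam /del.
have : r %% 4 < 4 by lia.
by case: (r %% 4) => [|[|[|[|t]]]] //= _ ->.
Qed.

Lemma bound_u r : 2 <= r -> (`|sg (u r) * gam r - sg (r - 1)| <= 2)%R.
Proof.
move=> hr; have := odd_u r; rewrite /sg /gam.
have : odd (r - 1) = ~~ odd r by rewrite oddB ?addbT //; lia.
have : odd r = odd (r %% 4) by rewrite odd_mod.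
have : r %% 4 < 4 by lia.
by case: (r %% 4) => [|[|[|[|t]]]] //= _ -> -> ->.
Qed.

Lemma gam_b r : (`|gam r| <= 2)%R.
Proof. by rewrite /gam; case: (r %% 4) => [|[|[|[|t]]]]. Qed.
Lemma del_b r : (`|del r| = 1)%R.
Proof. by rewrite /del; case: (r %% 4) => [|[|[|[|t]]]]. Qed.
Lemma gam_odd r : odd r -> gam r = 0%R.
Proof.
rewrite /gam -(odd_mod r (erefl : odd 4 = false)).
by case: (r %% 4) => [|[|[|[|t]]]].
Qed.
Lemma sg_b n : (`|sg n| = 1)%R.
Proof. by rewrite /sg; case: odd. Qed.
Lemma sgS n : sg n.+1 = (- sg n)%R.
Proof. by rewrite /sg /=; case: odd. Qed.

Lemma u_lt_v r : 1 <= r -> u r < v r.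
Proof. by rewrite vE; lia. Qed.
Lemma v_lt_u r : v r < u r.+1.
Proof. by rewrite vE uS; lia. Qed.

Lemma v_mono a b : a <= b -> v a <= v b.
Proof. by rewrite !vE => h; have := u_mono h; lia. Qed.

Lemma nonpent1 n r : 1 <= r -> u r < n < v r -> forall k, 2 <= k -> n != u k /\ n != v k.
Proof.
move=> hr hn k hk; split; apply/eqP => e.
- case: (leqP k r) => h; first by have := u_mono h; lia.
  have := u_mono h; have := v_lt_u r; lia.
- case: (ltngtP k r) => h.
  + have := v_lt_u k; have := u_mono h; lia.
  + have := v_mono (ltnW h); lia.
  + subst; lia.
Qed.

Lemma nonpent2 n r : 1 <= r -> v r < n < u r.+1 -> forall k, 2 <= k -> n != u k /\ n != v k.
Proof.
move=> hr hn k hk; split; apply/eqP => e.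
- case: (leqP k r) => h; first by have := u_mono h; have := u_lt_v hr; lia.
  have := u_mono h; lia.
- case: (leqP k r) => h; first by have := v_mono h; lia.
  have := v_mono h; have := v_lt_u r; rewrite (vE r.+1); lia.
Qed.

Lemma u1 : u 1 = 1. Proof. by rewrite uS u0. Qed.
Lemma v1 : v 1 = 2. Proof. by rewrite vE u1. Qed.

Lemma A0 N : A N 0 = 0%R.
Proof.
apply: big_pred0 => S; apply/negbTE/negP => /andP [/andP [/goodP g /eqP sn] ne].
have hm := maxS_in ne; have := g _ hm; have := le_sumS hm; lia.
Qed.

Lemma D0 N : D N 0 = 1%R.
Proof. rewrite D_split /= big_pred0 ?addr0 // => S; apply/negbTE/negP => /andP [/andP [/goodP g /eqP sn] ne]; have hm := maxS_in ne; have := g _ hm; have := le_sumS hm; lia. Qed.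

Lemma id_v2 r : 1 <= r -> (1 - sg (v r - 1) * gam r = sg (v r) * del r)%R.
Proof.
move=> hr; have := odd_v r; have hv : 1 <= v r by rewrite vE; lia.
rewrite /sg /gam /del (_ : odd (v r - 1) = ~~ odd (v r)); last by rewrite oddB ?addbT //; lia.
have : r %% 4 < 4 by lia.
by case: (r %% 4) => [|[|[|[|t]]]] //= _ ->; reflexivity.
Qed.

Lemma sg_pred r : 1 <= r -> (sg r + sg (r - 1) = 0)%R.
Proof.
move=> hr; rewrite /sg (_ : odd (r - 1) = ~~ odd r); last by rewrite oddB ?addbT //; lia.
by case: odd.
Qed.

Definition Inv N n :=
  (forall r, 1 <= r -> u r <= n < v r -> D N n = 0%R /\ A N n = (sg n * gam r)%R) /\
  (forall r, 1 <= r -> v r <= n < u r.+1 -> D N n = sg r /\ A N n = (sg n * del r)%R).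

Lemma inv_all N n : n <= N -> Inv N n.
Proof.
elim: n => [|n IH] hn.
  split => r hr hreg; exfalso; have := u_ge r; have := vE r; lia.
have [IH1 IH2] := IH (ltnW hn).
have hR1 := R1 (ltac:(lia) : n < N).
have hR2 := R2 (ltac:(lia) : n < N).
split => r hr hreg.
- case: (eqVneq n.+1 (u r)) => [e|ne].
  + case: (eqVneq r 1) => [r1|rne].
      subst r; have en : n = 0 by move: e; rewrite u1; lia.
      subst n.
      have [f0 g0] := FG_0 (N := N) (n := 1) (ltac:(lia)) (fun k hk => ltac:(have := u_ge k; rewrite vE; split; apply/eqP; lia)).
      rewrite hR1 hR2 f0 g0 D0 A0 /gam /=; split => //.
    have hr2 : 2 <= r by lia.
    have hur := u_ge r.
    have hreg' : v (r - 1) <= n < u (r - 1).+1.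
      have := v_lt_u (r - 1); rewrite (_ : (r - 1).+1 = r); lia.
    have [h1 h2] := IH2 (r - 1) (ltac:(lia)) hreg'.
    have [f g] := FG_u (N := N) (n := n.+1) (k := r) hn hr2 e.
    rewrite hR1 hR2 f g h1 h2 sgE (_ : (n == 0) = false); last by apply/eqP; lia.
    rewrite (_ : (n.+1 == 2) = false); last by apply/eqP; lia.
    split; first by have := sg_pred hr; lia.
    rewrite e (_ : n = u r - 1); last lia.
    by rewrite -(id_u hr2) addr0.
  + have hreg' : u r <= n < v r by lia.
    have [h1 h2] := IH1 r hr hreg'.
    have hnp := nonpent1 hr (ltac:(lia) : u r < n.+1 < v r).
    have [f g] := FG_0 (N := N) hn hnp.
    have hur := u_ge r.
    have hr1 : r = 1 \/ 3 <= u r by lia.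
    rewrite hR1 hR2 f g h1 h2 (_ : (n == 0) = false); last by apply/eqP; have := u1; lia.
    rewrite (_ : (n.+1 == 2) = false); last first.
      apply/eqP; case: hr1 => [r1|]; last lia.
      by subst r; move: hreg; rewrite u1 v1; lia.
    by rewrite sgS mulNr; split; lia.
- case: (eqVneq n.+1 (v r)) => [e|ne].
  + have hreg' : u r <= n < v r by have := u_lt_v hr; lia.
    have [h1 h2] := IH1 r hr hreg'.
    case: (eqVneq r 1) => [r1|rne].
      subst r; have en : n = 1 by move: e; rewrite v1; lia.
      subst n.
      have [f0 g0] := FG_0 (N := N) (n := 2) (ltac:(lia)) (fun k hk => ltac:(have := u_ge k; rewrite vE; split; apply/eqP; lia)).
      rewrite hR1 hR2 f0 g0 h1 h2 /gam /del /sg /=; split; reflexivity.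
    have hr2 : 2 <= r by lia.
    have hur := u_ge r.
    have [f g] := FG_v (N := N) (n := n.+1) (k := r) hn hr2 e.
    rewrite hR1 hR2 f g h1 h2 sgE (_ : (n == 0) = false); last by apply/eqP; have := vE r; lia.
    rewrite (_ : (n.+1 == 2) = false); last by apply/eqP; have := vE r; lia.
    split; first by lia.
    rewrite e (_ : n = v r - 1); last lia.
    by rewrite -(id_v2 hr) addr0.
  + have hreg' : v r <= n < u r.+1 by lia.
    have [h1 h2] := IH2 r hr hreg'.
    have hnp := nonpent2 hr (ltac:(lia) : v r < n.+1 < u r.+1).
    have [f g] := FG_0 (N := N) hn hnp.
    have hv := vE r; have hur := u_ge r.
    rewrite hR1 hR2 f g h1 h2 (_ : (n == 0) = false); last by apply/eqP; lia.
    rewrite (_ : (n.+1 == 2) = false); last by apply/eqP; lia.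
    by rewrite sgS mulNr; split; lia.
Qed.


Lemma region_ex n : 1 <= n -> exists2 r, 1 <= r & u r <= n < u r.+1.
Proof.
elim: n => [|n IH] // _.
case: (eqVneq n 0) => [->|hn].
  by exists 1 => //; rewrite u1 uS u1.
have [r hr hreg] := IH (ltac:(lia)).
case: (ltnP n.+1 (u r.+1)) => h.
  by exists r => //; lia.
exists r.+1 => //; have := u_lt (ltnSn r.+1); lia.
Qed.

Lemma sg_cases n : sg n = 1%R \/ sg n = (-1)%R.
Proof. by rewrite /sg; case: odd; [right|left]. Qed.

Theorem corollary1p8 :
  (forall n : nat, (0 < n)%N -> (`|Posz (Me n) - Posz (Mo n)| <= 2)%R) /\
  (forall N : nat, exists n : nat, (N < n)%N /\ Me n = Mo n).
Proof.
split.
- case=> [|k] // _.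
  rewrite MeMo_AD.
  set N := k.+1.
  have [r hr hreg] := region_ex (ltac:(lia) : 1 <= N).
  have [I1 I2] := inv_all (leqnn N).
  have [J1 J2] := inv_all (ltnW (ltnSn k) : k <= N).
  have hur := u_ge r.
  have hv := vE r.
  case: (ltnP N (v r)) => hNv.
  + have [_ hA] := I1 r hr (ltac:(lia)).
    rewrite hA.
    case: (eqVneq N (u r)) => [e|ne].
      case: (eqVneq r 1) => [r1|rne].
        subst r; have k0 : k = 0 by move: e; rewrite u1 /N; lia.
        rewrite k0 D0 /gam /= mulr0; lia.
      have hreg' : v (r - 1) <= k < u (r - 1).+1.
        have := v_lt_u (r - 1); rewrite (_ : (r - 1).+1 = r); rewrite /N in e; lia.
      have [hD _] := J2 (r - 1) (ltac:(lia)) hreg'.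
      rewrite hD e; apply: bound_u; lia.
    have [hD _] := J1 r hr (ltac:(rewrite /N in ne hreg hNv *; lia)).
    rewrite hD subr0; have := gam_b r; case: (sg_cases N) => ->; lia.
  + have [_ hA] := I2 r hr (ltac:(lia)).
    rewrite hA.
    have hD : (`|D N k| <= 1)%R.
      case: (ltnP k (v r)) => hk.
        have [hD _] := J1 r hr (ltac:(rewrite /N in hNv hreg *; lia)).
        by rewrite hD.
      have [hD _] := J2 r hr (ltac:(rewrite /N in hNv hreg *; lia)).
      by rewrite hD; case: (sg_cases r) => ->.
    have := del_b r; case: (sg_cases N) => ->; lia.
- move=> N0.
  set r := (N0.*2 + 3).
  have hr : 2 <= r by rewrite /r; lia.
  have hur := u_ge r.
  have er : r = N0.*2 + 3 by [].
  exists (u r).+1; split; first lia.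
  have [I1 _] := inv_all (leqnn (u r).+1).
  have [J1 _] := inv_all (ltnW (ltnSn (u r)) : u r <= (u r).+1).
  have [_ hA] := I1 r (ltac:(lia)) (ltac:(have := vE r; lia)).
  have [hD _] := J1 r (ltac:(lia)) (ltac:(have := vE r; lia)).
  have := MeMo_AD (u r); rewrite hA hD gam_odd; last by rewrite /r oddD odd_double.
  rewrite mulr0 subr0 => /eqP; rewrite subr_eq0 => /eqP [].
  done.
Qed.
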